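(* Let $\mathscr E$ be a closed totally disconnected subset of $\mathbb S^2$, and let $\mathscr I$ be the set of all isolated points of $\mathscr E$. Assume $\mathscr I$ is infinite. If $\mathscr F$ is a finite subset of $\mathbb S^2\setminus\mathscr E$, then $\mathscr E\cup\mathscr F$ is homeomorphic to $\mathscr E$. *)

(* Defs.v *)
From HB Require Import structures.
From mathcomp Require Import all_boot all_order all_algebra.
From mathcomp Require Import all_classical all_reals all_analysis.
Set Implicit Arguments. Unset Strict Implicit. Unset Printing Implicit Defensive.
Import Order.TTheory GRing.Theory Num.Theory.
Import numFieldTopology.Exports numFieldNormedType.Exports.
Local Open Scope classical_set_scope.
Local Open Scope ring_scope.

(* The unit sphere S^2 in R^3 (Euclidean norm), as a subset of 'M[R]_(1, 3)
   equipped with its usual (product) topology. *)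
Definition sphere2 (R : realType) : set 'M[R]_(1, 3) :=
  [set v | \sum_(i < 3) (v ord0 i) ^+ 2 = 1].

Arguments sphere2 R : clear implicits.

Definition homeomorphic_sets (T U : topologicalType) (A : set T) (B : set U) :=
  exists (f : T -> U) (g : U -> T),
    [/\ (forall x, A x -> B (f x)),
        (forall y, B y -> A (g y)),
        (forall x, A x -> g (f x) = x),
        (forall y, B y -> f (g y) = y) &
        ({within A, continuous f} /\ {within B, continuous g})].

(* Main.v *)
Require Import Defs.
From HB Require Import structures.
From mathcomp Require Import all_boot all_order all_algebra.
From mathcomp Require Import all_classical all_reals all_analysis.
From mathcomp Require Import ring lra.
From mathcomp Require Import finmap.
Set Implicit Arguments. Unset Strict Implicit. Unset Printing Implicit Defensive.
Import Order.TTheory GRing.Theory Num.Theory.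
Import numFieldTopology.Exports numFieldNormedType.Exports.
Local Open Scope classical_set_scope.
Local Open Scope ring_scope.

Section G.
Variables (R : realType) (V : normedModType R).

Lemma near_dist (y : V) e : 0 < e -> \forall z \near y, `|y - z| < e.
Proof. by move=> e0; apply: (proj1 (cvgrPdist_lt _ _) (@cvg_id _ (nbhs y))). Qed.

Lemma near_neq (y c : V) : y != c -> \forall z \near y, z != c.
Proof.
move=> yc; have := near_dist y (_ : 0 < `|y - c|).
rewrite normr_gt0 subr_eq0 => /(_ yc); apply: filterS => z.
by apply: contraTneq => ->; rewrite ltxx.
Qed.

Lemma near_notin (s : seq V) (y : V) : y \notin s -> \forall z \near y, z \notin s.
Proof.
elim: s => [|c s IH]; first by move=> _; apply: nearW.
rewrite in_cons negb_or => /andP[yc ys].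
by apply: filterS2 (near_neq yc) (IH ys) => z zc zs; rewrite in_cons negb_or zc.
Qed.

Section Core.
Variables (A : set V) (a : V) (x : nat -> V) (p : V).
Hypothesis Aa : \forall z \near a, ~ A z.
Hypothesis Ax : forall n, A (x n).
Hypothesis isox : forall n, \forall z \near x n, A z -> z = x n.
Hypothesis injx : injective x.
Hypothesis cvx : forall e, 0 < e -> exists N, forall n, (N <= n)%N -> `|x n - p| < e.

Lemma nAa : ~ A a.
Proof. exact: (nbhs_singleton Aa). Qed.

Lemma xna n : x n <> a.
Proof. by move=> e; apply: nAa; rewrite -e. Qed.

Definition fsh (z : V) : V :=
  match pselect (z = a) with
  | left _ => x 0
  | right _ => match pselect (exists n, z = x n) with
               | left H => x (projT1 (cid H)).+1
               | right _ => z end end.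

Definition gsh (z : V) : V :=
  match pselect (exists n, z = x n) with
  | left H => match projT1 (cid H) with 0 => a | m.+1 => x m end
  | right _ => z end.

Lemma fsh_a : fsh a = x 0.
Proof. by rewrite /fsh; case: pselect. Qed.

Lemma fsh_x n : fsh (x n) = x n.+1.
Proof.
rewrite /fsh; case: pselect => [/xna//|_]; case: pselect => [H|[]]; last by exists n.
by case: cid => m /= /injx ->.
Qed.

Lemma fsh_o z : z <> a -> (forall n, z <> x n) -> fsh z = z.
Proof.
move=> za zx; rewrite /fsh; case: pselect => // _; case: pselect => // -[n zn].
by case: (zx n).
Qed.

Lemma gsh_x0 : gsh (x 0) = a.
Proof.
rewrite /gsh; case: pselect => [H|[]]; last by exists 0%N.
by case: cid => m /= /injx <-.
Qed.

Lemma gsh_xS n : gsh (x n.+1) = x n.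
Proof.
rewrite /gsh; case: pselect => [H|[]]; last by exists n.+1.
by case: cid => m /= /injx <-.
Qed.

Lemma gsh_o z : (forall n, z <> x n) -> gsh z = z.
Proof. by move=> zx; rewrite /gsh; case: pselect => // -[n zn]; case: (zx n). Qed.

Lemma cases3 z : z = a \/ (exists n, z = x n) \/ (z <> a /\ forall n, z <> x n).
Proof.
case: (pselect (z = a)) => [|za]; first by left.
case: (pselect (exists n, z = x n)) => [|zx]; first by right; left.
by right; right; split => // n e; apply: zx; exists n.
Qed.

Lemma cont_crit (D : set V) (f : V -> V) :
  (forall y, D y -> forall e, 0 < e -> \forall z \near y, D z -> `|f y - f z| < e) ->
  {within D, continuous f}.
Proof.
move=> H; apply/subspace_continuousP => y Dy.
apply/cvgrPdist_lt => e e0; exact: H.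
Qed.

Lemma generic_near y : y <> a -> (forall n, y <> x n) -> forall e, 0 < e ->
  exists N, \forall z \near y, [/\ `|y - z| < e / 2, z <> a,
     forall n, (n <= N)%N -> z <> x n & forall n, (N <= n)%N -> `|x n - p| < e / 4].
Proof.
move=> ya yx e e0.
have e4 : 0 < e / 4 by rewrite divr_gt0.
have [N HN] := cvx e4.
exists N.
have yns : y \notin [seq x n | n <- iota 0 N.+1].
  by apply/mapP => -[n _ /yx].
have H2 := near_notin yns.
have H1 : \forall z \near y, z != a by apply: near_neq; apply/eqP.
have H3 : \forall z \near y, `|y - z| < e / 2 by apply: near_dist; rewrite divr_gt0.
near=> z.
have zd : `|y - z| < e / 2 by near: z.
have zs : z \notin [seq x n | n <- iota 0 N.+1] by near: z.
have za : z != a by near: z.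
split => //; first exact/eqP.
move=> n nN zn; move: zs; rewrite zn; apply/negP; rewrite negbK.
by apply/mapP; exists n => //; rewrite mem_iota.
Unshelve. all: by end_near.
Qed.


Lemma tri3 (u v w t : V) : `|u - t| <= `|u - v| + `|v - w| + `|w - t|.
Proof.
have -> : u - t = (u - v) + (v - w) + (w - t) by rewrite !addrA !subrK.
by apply: (le_trans (ler_normD _ _)); rewrite lerD2r ler_normD.
Qed.

Lemma fsh_cont : {within A `|` [set a], continuous fsh}.
Proof.
apply: cont_crit => y Dy e e0.
case: (cases3 y) => [->|[[n ->]|[ya yx]]].
- by apply: filterS Aa => z nAz [//|->]; rewrite subrr normr0.
- have H1 : \forall z \near x n, z != a by apply: near_neq; apply/eqP; exact: xna.
  apply: filterS2 (isox n) H1 => z H H' [/H ->|za]; first by rewrite subrr normr0.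
  by move: H'; rewrite za eqxx.
- have [N HN] := generic_near ya yx e0.
  apply: filterS HN => z [zd za zN Np] _.
  rewrite (fsh_o ya yx).
  case: (cases3 z) => [//|[[n zn]|[za' zx]]]; last first.
    by rewrite fsh_o //; apply: lt_le_trans zd _; rewrite ler_pdivrMr // ler_peMr //; [exact: ltW|lra].
  have Nn : (N < n)%N by rewrite ltnNge; apply/negP => /zN.
  rewrite zn fsh_x; apply: le_lt_trans (tri3 _ (x n) p _) _.
  have h1 := Np n (ltnW Nn); have h2 := Np n.+1 (leq_trans (ltnW Nn) (leqnSn n)).
  rewrite (distrC p); move: zd; rewrite zn => zd; lra.
Qed.

Lemma gsh_cont : {within A, continuous gsh}.
Proof.
apply: cont_crit => y Dy e e0.
case: (cases3 y) => [ya|[[n ->]|[ya yx]]].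
- by exfalso; apply: nAa; rewrite -ya.
- by apply: filterS (isox n) => z H /H ->; rewrite subrr normr0.
- have [N HN] := generic_near ya yx e0.
  apply: filterS HN => z [zd za zN Np] _.
  rewrite (gsh_o yx).
  case: (cases3 z) => [//|[[n zn]|[za' zx]]]; last first.
    by rewrite gsh_o //; apply: lt_le_trans zd _; rewrite ler_pdivrMr // ler_peMr //; [exact: ltW|lra].
  have Nn : (N < n)%N by rewrite ltnNge; apply/negP => /zN.
  case: n Nn zn => [//|m] Nm zn.
  rewrite zn gsh_xS; apply: le_lt_trans (tri3 _ (x m.+1) p _) _.
  have h1 := Np m.+1 (ltnW Nm); have h2 := Np m Nm.
  rewrite (distrC p); move: zd; rewrite zn => zd; lra.
Qed.

Lemma shift_homeo : homeomorphic_sets (A `|` [set a]) A.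
Proof.
exists fsh, gsh; split.
- move=> z Dz; case: (cases3 z) => [->|[[n ->]|[za zx]]]; first by rewrite fsh_a.
    by rewrite fsh_x.
  by rewrite fsh_o //; case: Dz.
- move=> z Az; case: (cases3 z) => [za|[[[|n] ->]|[za zx]]].
  + by case: nAa; rewrite -za.
  + by rewrite gsh_x0; right.
  + by rewrite gsh_xS; left.
  + by rewrite gsh_o //; left.
- move=> z _; case: (cases3 z) => [->|[[[|n] ->]|[za zx]]].
  + by rewrite fsh_a gsh_x0.
  + by rewrite fsh_x gsh_xS.
  + by rewrite fsh_x gsh_xS.
  + by rewrite !(fsh_o, gsh_o).
- move=> z Az; case: (cases3 z) => [za|[[[|n] ->]|[za zx]]].
  + by case: nAa; rewrite -za.
  + by rewrite gsh_x0 fsh_a.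
  + by rewrite gsh_xS fsh_x.
  + by rewrite gsh_o // fsh_o.
- split; [exact: fsh_cont|exact: gsh_cont].
Qed.

End Core.
End G.

Lemma within_map_cvg (T U : topologicalType) (A : set T) (B : set U) (f : T -> U) x :
  (forall z, A z -> B (f z)) -> A x -> f @ within A (nbhs x) --> f x ->
  f @ within A (nbhs x) --> within B (nbhs (f x)).
Proof.
move=> AB Ax cf P /= WP.
have := cf _ WP; rewrite /within /= !nbhs_simpl /=.
by apply: filterS => z H Az; apply: H => //; exact: AB.
Qed.

Lemma homeo_trans (T U W : topologicalType) (A : set T) (B : set U) (C : set W) :
  homeomorphic_sets A B -> homeomorphic_sets B C -> homeomorphic_sets A C.
Proof.
move=> [f1 [g1 [AB1 BA1 gf1 fg1 [cf1 cg1]]]] [f2 [g2 [AB2 BA2 gf2 fg2 [cf2 cg2]]]].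
exists (f2 \o f1), (g1 \o g2); split => /=.
- by move=> z Az; apply: AB2; apply: AB1.
- by move=> z Cz; apply: BA1; apply: BA2.
- by move=> z Az; rewrite gf2 ?gf1 //; exact: AB1.
- by move=> z Cz; rewrite fg1 ?fg2 //; exact: BA2.
split.
- apply/subspace_continuousP => z Az.
  move/subspace_continuousP: cf1 => /(_ z Az) c1.
  move/subspace_continuousP: cf2 => /(_ (f1 z) (AB1 z Az)) c2.
  exact: cvg_comp (within_map_cvg AB1 Az c1) c2.
- apply/subspace_continuousP => z Cz.
  move/subspace_continuousP: cg2 => /(_ z Cz) c1.
  move/subspace_continuousP: cg1 => /(_ (g2 z) (BA2 z Cz)) c2.
  exact: cvg_comp (within_map_cvg BA2 Cz c1) c2.
Qed.

Lemma sphere_norm (R : realType) (v : 'M[R]_(1, 3)) : sphere2 R v -> `|v| <= 1.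
Proof.
rewrite /sphere2 /= => Hs.
rewrite [X in X <= _]/Num.norm /= mx_normrE; apply: bigmax_le => // -[i j] _ /=.
rewrite (ord1 i).
have h : (v ord0 j) ^+ 2 <= 1.
  rewrite -Hs (bigD1 j) //= lerDl; apply: sumr_ge0 => k _; exact: sqr_ge0.
have h2 : `|v ord0 j| ^+ 2 = (v ord0 j) ^+ 2 by rewrite real_normK // num_real.
have h3 : 0 <= `|v ord0 j| by [].
nra.
Qed.

Lemma E_compact (R : realType) (E : set 'M[R]_(1, 3)) :
  E `<=` sphere2 R -> closed E -> compact E.
Proof.
move=> ES Ec; apply: bounded_closed_compact => //.
exists 1; split => // M M1 v /ES /sphere_norm h.
by apply: le_trans h _; apply: ltW.
Qed.

Lemma cluster_iso (R : realType) (E : set 'M[R]_(1, 3)) :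
  compact E -> ~ finite_set (isolated E) ->
  exists p, forall r, 0 < r -> exists z, [/\ isolated E z, z <> p & `|p - z| < r].
Proof.
move=> Ec Ei; apply: contrapT => nH.
have H' : forall p : 'M[R]_(1, 3), exists r : R, 0 < r /\
    forall z, isolated E z -> `|p - z| < r -> z = p.
  move=> p; apply: contrapT => nr; apply: nH; exists p => r r0.
  apply: contrapT => nz; apply: nr; exists r; split => // z Iz d.
  by apply: contrapT => zp; apply: nz; exists z; split.
move: Ec; rewrite compact_cover => /(_ ('M[R]_(1, 3) * R)%type
  [set pr | 0 < pr.2 /\ forall z, isolated E z -> `|pr.1 - z| < pr.2 -> z = pr.1]
  (fun pr => ball pr.1 pr.2)).
case.
- by move=> pr _; exact: ball_open.
- move=> q Eq; have [r [r0 Hr]] := H' q.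
  exists (q, r) => //=; exact: ballxx.
move=> D' D'D cov; apply: Ei.
have fin : finite_set ((fun pr : 'M[R]_(1, 3) * R => pr.1) @` [set` D']) by exact: finite_image.
apply: sub_finite_set fin.
move=> z Iz; have /cov [pr D'pr bz] := isolatedS Iz.
exists pr => //; have /set_mem [_ H] := D'D _ D'pr.
rewrite (H z Iz) //; move: bz; rewrite -ball_normE.
by [].
Qed.

Lemma build_seq (R : realType) (V : normedModType R) (P : set V) (p : V) :
  (forall r, 0 < r -> exists z, [/\ P z, z <> p & `|p - z| < r]) ->
  exists x : nat -> V, [/\ forall n, P (x n), injective x &
    forall e, 0 < e -> exists N, forall n, (N <= n)%N -> `|x n - p| < e].
Proof.
move=> Hp.
have step : forall ny : nat * V, exists z, [/\ P z, z <> p,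
    ny.2 <> p -> `|p - z| < `|p - ny.2| & `|p - z| < (ny.1.+1%:R)^-1].
  move=> [n y] /=.
  have n0 : 0 < (n.+1%:R : R)^-1 by rewrite invr_gt0 ltr0n.
  case: (pselect (y = p)) => [yp|yp].
    have [z [Pz zp d]] := Hp _ n0; exists z; split => //.
  have r0 : 0 < Num.min `|p - y| (n.+1%:R)^-1.
    by rewrite lt_min n0 andbT normr_gt0 subr_eq0; apply/eqP => e; apply: yp.
  have [z [Pz zp d]] := Hp _ r0; move: d; rewrite lt_min => /andP[d1 d2].
  by exists z; split.
have [s Hs] := choice step.
pose x := fix F n := if n is m.+1 then s (n, F m) else s (0%N, p).
have xP : forall n, P (x n) /\ x n <> p.
  by case => [|n]; [have [] := Hs (0%N, p)|have [] := Hs (n.+1, x n)].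
have xd : forall n, `|p - x n| < (n.+1%:R)^-1.
  by case => [|n]; [have [] := Hs (0%N, p)|have [] := Hs (n.+1, x n)].
have xdec : forall n, `|p - x n.+1| < `|p - x n|.
  by move=> n /=; have [_ _ H _] := Hs (n.+1, x n); apply: H; case: (xP n).
have xmono : forall m n, (m < n)%N -> `|p - x n| < `|p - x m|.
  move=> m; elim => [//|n IH]; rewrite ltnS leq_eqVlt => /orP[/eqP ->|mn].
    exact: xdec.
  exact: lt_trans (xdec n) (IH mn).
exists x; split.
- by move=> n; case: (xP n).
- move=> m n e; case: (ltngtP m n) => // [mn|nm].
    by have := xmono _ _ mn; rewrite e ltxx.
  by have := xmono _ _ nm; rewrite e ltxx.
- move=> e e0.
  have ei0 : 0 <= e^-1 by rewrite invr_ge0 ltW.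
  exists (Num.Def.archi_bound e^-1) => n Nn.
  rewrite distrC; apply: lt_trans (xd n) _.
  rewrite invf_plt ?posrE ?ltr0n //.
  apply: lt_le_trans (archi_boundP ei0) _.
  by rewrite ler_nat (leq_trans Nn).
Qed.

Lemma homeo_refl (R : realType) (V : normedModType R) (A : set V) : homeomorphic_sets A A.
Proof.
exists id, id; split => //; split; apply: cont_crit => y _ e e0;
  by apply: filterS (near_dist y e0) => z h _.
Qed.

Unset Implicit Arguments.
Theorem lemma3p7 (R : realType) (E F : set 'M[R]_(1, 3)) :
  E `<=` sphere2 R ->
  closed E ->
  totally_disconnected E ->
  ~ finite_set (isolated E) ->
  finite_set F ->
  F `<=` sphere2 R `\` E ->
  homeomorphic_sets (E `|` F) E.
Proof.
move=> ES Ecl _ Ei /finite_seqP [s ->] FS.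
have [p Hp] := cluster_iso (E_compact ES Ecl) Ei.
have [x [Ix injx cvx]] := build_seq Hp.
have Ex n : E (x n) by exact: isolatedS (Ix n).
have isoE n : \forall z \near x n, E z -> z = x n.
  have [_ [U Un UE]] := Ix n; apply: filterS Un => z Uz Ez.
  by have : (U `&` E) z by []; rewrite UE.
have nearnE c : ~ E c -> \forall z \near c, ~ E z.
  move=> nEc; apply: open_nbhs_nbhs; split => //; exact: closed_openC.
have : forall c, c \in s -> ~ E c by move=> c /FS [].
elim: s {FS} => [|c s IH] Hs.
  have -> : E `|` [set` [::]] = E by apply/seteqP; split => z //=; [case|left].
  exact: homeo_refl.
have Hs' : forall c, c \in s -> ~ E c by move=> d ds; apply: Hs; rewrite in_cons ds orbT.
have Ec : ~ E c by apply: Hs; rewrite in_cons eqxx.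
case: (boolP (c \in s)) => cs.
  have -> : E `|` [set` c :: s] = E `|` [set` s].
    apply/seteqP; split => z /=; last by case => [|zs]; [left|right; rewrite in_cons zs orbT].
    case => [|]; [by left|rewrite /= in_cons => /orP[/eqP ->|zs]; by right].
  exact: IH.
have -> : E `|` [set` c :: s] = (E `|` [set` s]) `|` [set c].
  apply/seteqP; split => z /=.
    by case => [|]; [left; left|rewrite /= in_cons => /orP[/eqP ->|zs]; [right|left; right]].
  by case => [[|zs]|->]; [left|right; rewrite /= in_cons zs orbT|right; rewrite /= in_cons eqxx].
apply: homeo_trans (IH Hs').
apply: (@shift_homeo _ _ _ c x p).
- have h1 := nearnE c Ec; have h2 := near_notin cs.
  apply: filterS2 h1 h2 => z nEz zs [//|]; exact/negP.
- by move=> n; left.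
- move=> n; have h2 : x n \notin s by apply/negP => /Hs'; apply; exact: Ex.
  apply: filterS2 (isoE n) (near_notin h2) => z H zs [/H //|]; by move=> zs'; move/negP: zs.
- exact: injx.
- exact: cvx.
Qed.
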